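(* Let $n\ge 2$ and let $\mathsf r=[r_1,\dots,r_{2n-2}]\in\textsc{fact}(\lambda_n)$. Then $\mathsf r$ is tree-like if and only if there exist integers $a_0,\dots,a_{2n-2}$ such that, for every $\ell=1,\dots,2n-2$, we have $r_\ell=(\!(a_{\ell-1},a_\ell)\!)$ and $|a_\ell-a_{\ell-1}|<n$.
   Context: The affine symmetric group $\widetilde S_n$ is the group, under composition $(vw)(k)=v(w(k))$, of bijections $w:\mathbb Z\to\mathbb Z$ with $w(i+n)=w(i)+n$ for all $i$ and $\sum_{i=1}^n w(i)=\binom{n+1}{2}$. For integers $i\not\equiv j\pmod n$, $(\!(i,j)\!)$ is the affine reflection interchanging $i+kn$ and $j+kn$ for every $k\in\mathbb Z$ and fixing all other integers; thus $(\!(i,j)\!)=(\!(j,i)\!)=(\!(i+kn,j+kn)\!)$. Let $\lambda_n\in\widetilde S_n$ be the element with $\lambda_n(k)=k+n$ if $k\not\equiv0\pmod n$ and $\lambda_n(k)=k-n(n-1)$ if $k\equiv 0\pmod n$ (translation by $(1,\dots,1,-n+1)$). The reflection length of $w$ is the minimal number of reflections with product $w$; $\lambda_n$ has reflection length $2n-2$. A factorization of $w$ is a sequence $[r_1,\dots,r_m]$ of reflections with $w=r_1r_2\cdots r_m$, and $\textsc{fact}(\lambda_n)$ is the set of factorizations of $\lambda_n$ with $m=2n-2$. A factorization $[r_1,\dots,r_{2n-2}]\in\textsc{fact}(\lambda_n)$ is tree-like if one can write $r_k=(\!(a_{k-1},b_k)\!)$ with integers $a_{k-1}<b_k$ for $1\le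 k\le 2n-2$, such that $a_k\equiv b_k\pmod n$ for $1\le k\le 2n-3$. *)

(* Defs.v *)
From Stdlib Require Import ZArith List Lia.
Open Scope Z_scope.

(* The affine reflection ((i,j)) of the affine symmetric group on n letters:
   interchanges i + k n and j + k n for all k, fixes other integers.
   Only meaningful when i mod n <> j mod n. *)
Definition aff_refl (n : nat) (i j : Z) : Z -> Z :=
  fun k =>
    if Z.eqb (k mod Z.of_nat n) (i mod Z.of_nat n) then k + (j - i)
    else if Z.eqb (k mod Z.of_nat n) (j mod Z.of_nat n) then k + (i - j)
    else k.

Definition is_refl_ij (n : nat) (r : Z -> Z) (i j : Z) : Prop :=
  i mod Z.of_nat n <> j mod Z.of_nat n /\ forall k, r k = aff_refl n i j k.

Definition is_affine_reflection (n : nat) (r : Z -> Z) : Prop :=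
  exists i j, is_refl_ij n r i j.

Definition lambda_n (n : nat) : Z -> Z :=
  fun k =>
    if Z.eqb (k mod Z.of_nat n) 0 then k - Z.of_nat n * (Z.of_nat n - 1)
    else k + Z.of_nat n.

(* Product r_1 r_2 ... r_m with (vw)(k) = v(w(k)). *)
Definition prod_list (rs : list (Z -> Z)) : Z -> Z :=
  fold_right (fun r acc => fun k => r (acc k)) (fun k => k) rs.

(* The l-th factor r_l (1-indexed). *)
Definition factor (rs : list (Z -> Z)) (l : nat) : Z -> Z :=
  nth (l - 1) rs (fun k => k).

Definition in_fact_lambda (n : nat) (rs : list (Z -> Z)) : Prop :=
  length rs = (2 * n - 2)%nat /\
  (forall r, In r rs -> is_affine_reflection n r) /\
  (forall k, prod_list rs k = lambda_n n k).

Definition tree_like (n : nat) (rs : list (Z -> Z)) : Prop :=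
  exists a b : nat -> Z,
    (forall l : nat, (1 <= l <= 2 * n - 2)%nat ->
        a (l - 1)%nat < b l /\ is_refl_ij n (factor rs l) (a (l - 1)%nat) (b l)) /\
    (forall l : nat, (1 <= l <= 2 * n - 3)%nat ->
        a l mod Z.of_nat n = b l mod Z.of_nat n).

(* Main.v *)
Require Import Defs.
From Stdlib Require Import ZArith List Lia.
Open Scope Z_scope.

Lemma ar_i n i j x : x mod Z.of_nat n = i mod Z.of_nat n -> aff_refl n i j x = x + (j - i).
Proof. intros H. unfold aff_refl. rewrite H, Z.eqb_refl. reflexivity. Qed.

Lemma ar_j n i j x : i mod Z.of_nat n <> j mod Z.of_nat n ->
  x mod Z.of_nat n = j mod Z.of_nat n -> aff_refl n i j x = x + (i - j).
Proof. intros Hij H. unfold aff_refl. rewrite H.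
  destruct (Z.eqb_spec (j mod Z.of_nat n) (i mod Z.of_nat n)); [congruence|].
  rewrite Z.eqb_refl. reflexivity. Qed.

Lemma ar_o n i j x : x mod Z.of_nat n <> i mod Z.of_nat n ->
  x mod Z.of_nat n <> j mod Z.of_nat n -> aff_refl n i j x = x.
Proof. intros H1 H2. unfold aff_refl.
  destruct (Z.eqb_spec (x mod Z.of_nat n) (i mod Z.of_nat n)); [congruence|].
  destruct (Z.eqb_spec (x mod Z.of_nat n) (j mod Z.of_nat n)); [congruence|]. reflexivity. Qed.

Lemma modadd n x d y : (0 < Z.of_nat n) -> x mod Z.of_nat n = y mod Z.of_nat n ->
  (x + d) mod Z.of_nat n = (y + d) mod Z.of_nat n.
Proof. intros Hn H. rewrite Zplus_mod, H, <- Zplus_mod. reflexivity. Qed.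

Lemma ar_mod n i j x : (0 < Z.of_nat n) -> i mod Z.of_nat n <> j mod Z.of_nat n ->
  (aff_refl n i j x) mod Z.of_nat n =
  if Z.eqb (x mod Z.of_nat n) (i mod Z.of_nat n) then j mod Z.of_nat n
  else if Z.eqb (x mod Z.of_nat n) (j mod Z.of_nat n) then i mod Z.of_nat n
  else x mod Z.of_nat n.
Proof. intros Hn Hij.
  destruct (Z.eqb_spec (x mod Z.of_nat n) (i mod Z.of_nat n)) as [E|E].
  - rewrite ar_i by auto. replace j with (i + (j - i)) at 2 by ring. apply modadd; auto.
  - destruct (Z.eqb_spec (x mod Z.of_nat n) (j mod Z.of_nat n)) as [F|F].
    + rewrite ar_j by auto. replace i with (j + (i - j)) at 2 by ring. apply modadd; auto.
    + rewrite ar_o; auto.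
Qed.

Lemma ar_invol n i j x : (0 < Z.of_nat n) -> i mod Z.of_nat n <> j mod Z.of_nat n ->
  aff_refl n i j (aff_refl n i j x) = x.
Proof. intros Hn Hij.
  destruct (Z.eqb_spec (x mod Z.of_nat n) (i mod Z.of_nat n)) as [E|E].
  - rewrite (ar_i n i j x) by auto. rewrite ar_j; auto; [ring|].
    replace j with (i + (j - i)) at 2 by ring. apply modadd; auto.
  - destruct (Z.eqb_spec (x mod Z.of_nat n) (j mod Z.of_nat n)) as [F|F].
    + rewrite (ar_j n i j x) by auto. rewrite ar_i; auto; [ring|].
      replace i with (j + (i - j)) at 2 by ring. apply modadd; auto.
    + rewrite (ar_o n i j x) by auto. rewrite ar_o; auto.
Qed.

Lemma ar_cong n i j x y : (0 < Z.of_nat n) -> i mod Z.of_nat n <> j mod Z.of_nat n ->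
  x mod Z.of_nat n = y mod Z.of_nat n ->
  (aff_refl n i j x) mod Z.of_nat n = (aff_refl n i j y) mod Z.of_nat n.
Proof. intros Hn Hij H. rewrite !ar_mod by auto. rewrite H. reflexivity. Qed.

Lemma ar_shift n i j t x : (0 < Z.of_nat n) ->
  aff_refl n (i + t * Z.of_nat n) (j + t * Z.of_nat n) x = aff_refl n i j x.
Proof. intros Hn. unfold aff_refl. rewrite !Z_mod_plus_full.
  replace (j + t * Z.of_nat n - (i + t * Z.of_nat n)) with (j - i) by ring.
  replace (i + t * Z.of_nat n - (j + t * Z.of_nat n)) with (i - j) by ring. reflexivity. Qed.

Lemma ar_sym n i j x : i mod Z.of_nat n <> j mod Z.of_nat n ->
  aff_refl n j i x = aff_refl n i j x.
Proof. intros Hij. unfold aff_refl.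
  destruct (Z.eqb_spec (x mod Z.of_nat n) (i mod Z.of_nat n)) as [E|E];
  destruct (Z.eqb_spec (x mod Z.of_nat n) (j mod Z.of_nat n)) as [F|F]; try congruence. Qed.

Fixpoint T (rs : list (Z -> Z)) (y : Z) (k : nat) : Z :=
  match k with 0%nat => y | S k' => nth k' rs (fun x => x) (T rs y k') end.

Definition good n (f : Z -> Z) : Prop :=
  (forall x, f (f x) = x) /\
  (forall x y, x mod Z.of_nat n = y mod Z.of_nat n -> f x mod Z.of_nat n = f y mod Z.of_nat n).

Lemma refl_good n r : (0 < Z.of_nat n) -> is_affine_reflection n r -> good n r.
Proof. intros Hn [i [j [Hij Hr]]]. split.
  - intros x. rewrite !Hr. apply ar_invol; auto.
  - intros x y H. rewrite !Hr. apply ar_cong; auto. Qed.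

Lemma nth_good n rs k : (0 < Z.of_nat n) -> (forall r, In r rs -> is_affine_reflection n r) ->
  good n (nth k rs (fun x => x)).
Proof. intros Hn H. destruct (Nat.lt_ge_cases k (length rs)).
  - apply refl_good; auto. apply H, nth_In; auto.
  - rewrite nth_overflow by auto. split; auto. Qed.

Lemma firstn_S_nth {A} (l : list A) k d : (k < length l)%nat ->
  firstn (S k) l = firstn k l ++ nth k l d :: nil.
Proof. revert k; induction l as [|a l IH]; intros k Hk; simpl in *; [lia|].
  destruct k; simpl; auto. rewrite IH by lia. reflexivity. Qed.

Lemma prod_app l1 l2 z : prod_list (l1 ++ l2) z = prod_list l1 (prod_list l2 z).
Proof. unfold prod_list. rewrite fold_right_app.
  induction l1; simpl; auto. rewrite IHl1. reflexivity. Qed.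

Lemma prod_one r z : prod_list (r :: nil) z = r z.
Proof. reflexivity. Qed.

Lemma PT n rs y k : (0 < Z.of_nat n) -> (forall r, In r rs -> is_affine_reflection n r) ->
  (k <= length rs)%nat -> prod_list (firstn k rs) (T rs y k) = y.
Proof. intros Hn H. induction k; intros Hk; cbn [T]; auto.
  rewrite (firstn_S_nth _ _ (fun x => x)) by lia. rewrite prod_app, prod_one.
  destruct (nth_good n rs k Hn H) as [Hi _]. rewrite Hi. apply IHk; lia. Qed.

Lemma TP n rs w k : (0 < Z.of_nat n) -> (forall r, In r rs -> is_affine_reflection n r) ->
  (k <= length rs)%nat -> T rs (prod_list (firstn k rs) w) k = w.
Proof. intros Hn H. revert w. induction k; intros w Hk; cbn [T]; auto.
  rewrite (firstn_S_nth _ _ (fun x => x)) by lia. rewrite prod_app, prod_one.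
  rewrite IHk by lia.
  destruct (nth_good n rs k Hn H) as [Hi _]. apply Hi. Qed.

Lemma Tcong n rs x y k : (0 < Z.of_nat n) -> (forall r, In r rs -> is_affine_reflection n r) ->
  x mod Z.of_nat n = y mod Z.of_nat n -> T rs x k mod Z.of_nat n = T rs y k mod Z.of_nat n.
Proof. intros Hn H Hxy. induction k; simpl; auto.
  destruct (nth_good n rs k Hn H) as [_ Hc]. apply Hc; auto. Qed.

Lemma Trefl n rs x y k : (0 < Z.of_nat n) -> (forall r, In r rs -> is_affine_reflection n r) ->
  T rs x k mod Z.of_nat n = T rs y k mod Z.of_nat n -> x mod Z.of_nat n = y mod Z.of_nat n.
Proof. intros Hn H. induction k; simpl; auto. intros E. apply IHk.
  destruct (nth_good n rs k Hn H) as [Hi Hc].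
  rewrite <- (Hi (T rs x k)), <- (Hi (T rs y k)). apply Hc; auto. Qed.

Lemma lam_T n rs y : (1 <= n)%nat -> in_fact_lambda n rs ->
  lambda_n n (T rs y (length rs)) = y.
Proof. intros Hn [Hl [H Hp]]. rewrite <- Hp.
  rewrite <- (firstn_all rs) at 1. apply PT with n; auto; lia. Qed.

Lemma net n rs y : (1 <= n)%nat -> in_fact_lambda n rs ->
  T rs y (length rs) mod Z.of_nat n = y mod Z.of_nat n /\
  (T rs y (length rs) - y = - Z.of_nat n \/ T rs y (length rs) - y = Z.of_nat n * (Z.of_nat n - 1)).
Proof. intros Hn Hf. pose proof (lam_T n rs y Hn Hf) as E. unfold lambda_n in E.
  remember (T rs y (length rs)) as z eqn:Ez; clear Ez.
  assert (0 < Z.of_nat n) by lia.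
  destruct (Z.eqb_spec (z mod Z.of_nat n) 0) as [F|F]; subst y; split.
  - replace (z - Z.of_nat n * (Z.of_nat n - 1)) with (z + (-(Z.of_nat n - 1)) * Z.of_nat n) by ring.
    rewrite Z_mod_plus_full. reflexivity.
  - right. ring.
  - replace (z + Z.of_nat n) with (z + 1 * Z.of_nat n) by ring.
    rewrite Z_mod_plus_full. reflexivity.
  - left. ring.
Qed.

Definition chain n rs (c : nat -> Z) : Prop :=
  forall k, (k < length rs)%nat -> c k mod Z.of_nat n <> c (S k) mod Z.of_nat n /\
    forall x, nth k rs (fun x => x) x = aff_refl n (c k) (c (S k)) x.

Lemma chain_T n rs c k : chain n rs c -> (k <= length rs)%nat -> T rs (c 0%nat) k = c k.
Proof. intros Hc. induction k; intros Hk; cbn [T]; auto.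
  destruct (Hc k ltac:(lia)) as [Hd He]. rewrite He, IHk by lia.
  unfold aff_refl. rewrite Z.eqb_refl. f_equal; ring. Qed.

Lemma chain_step n rs c y k : chain n rs c -> (k < length rs)%nat ->
  T rs y (S k) = aff_refl n (c k) (c (S k)) (T rs y k).
Proof. intros Hc Hk. cbn [T]. destruct (Hc k Hk) as [_ He]. apply He. Qed.

Lemma nonmain n rs c y k : (1 <= n)%nat -> in_fact_lambda n rs -> chain n rs c ->
  (k <= length rs)%nat -> y mod Z.of_nat n <> c 0%nat mod Z.of_nat n ->
  T rs y k mod Z.of_nat n <> c k mod Z.of_nat n.
Proof. intros Hn Hf Hc Hk Hy E. apply Hy. destruct Hf as [_ [Hr _]].
  apply (Trefl n rs y (c 0%nat) k); [lia|auto|]. rewrite (chain_T n rs c k) by auto. auto. Qed.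

Lemma mono_step n rs c y k : (1 <= n)%nat -> in_fact_lambda n rs -> chain n rs c ->
  (forall k, (k < length rs)%nat -> c k < c (S k)) ->
  (k < length rs)%nat -> y mod Z.of_nat n <> c 0%nat mod Z.of_nat n ->
  T rs y (S k) <= T rs y k.
Proof. intros Hn Hf Hc Hinc Hk Hy. rewrite (chain_step n rs c) by auto.
  pose proof (nonmain n rs c y k Hn Hf Hc ltac:(lia) Hy) as H1.
  pose proof (Hinc k Hk). destruct (Hc k Hk) as [Hd _].
  destruct (Z.eq_dec (T rs y k mod Z.of_nat n) (c (S k) mod Z.of_nat n)) as [E|E].
  - rewrite ar_j by auto. lia.
  - rewrite ar_o by auto. lia. Qed.

Lemma mono n rs c y a b : (1 <= n)%nat -> in_fact_lambda n rs -> chain n rs c ->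
  (forall k, (k < length rs)%nat -> c k < c (S k)) ->
  (a <= b)%nat -> (b <= length rs)%nat -> y mod Z.of_nat n <> c 0%nat mod Z.of_nat n ->
  T rs y b <= T rs y a.
Proof. intros Hn Hf Hc Hinc Hab Hb Hy. induction b.
  - assert (a = 0%nat) by lia. subst. lia.
  - destruct (Nat.eq_dec a (S b)). subst; lia.
    pose proof (mono_step n rs c y b Hn Hf Hc Hinc ltac:(lia) Hy). specialize (IHb ltac:(lia) ltac:(lia)). lia.
Qed.

Theorem thmA n rs c : (1 <= n)%nat -> in_fact_lambda n rs -> chain n rs c ->
  (forall k, (k < length rs)%nat -> c k < c (S k)) ->
  forall k, (k < length rs)%nat -> c (S k) - c k < Z.of_nat n.
Proof. intros Hn Hf Hc Hinc k Hk.
  pose proof Hf as [_ [Hr _]].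
  set (y := prod_list (firstn k rs) (c (S k))).
  assert (Ty : T rs y k = c (S k)) by (apply TP with n; auto; lia).
  destruct (Hc k Hk) as [Hd He].
  assert (Hy : y mod Z.of_nat n <> c 0%nat mod Z.of_nat n).
  { intros E. apply Hd. rewrite <- Ty, <- (chain_T n rs c k Hc ltac:(lia)).
    symmetry. apply Tcong; auto; lia. }
  assert (TSk : T rs y (S k) = c k).
  { rewrite (chain_step n rs c) by auto. rewrite Ty. unfold aff_refl.
    destruct (Z.eqb_spec (c (S k) mod Z.of_nat n) (c k mod Z.of_nat n)); [congruence|].
    rewrite Z.eqb_refl. ring. }
  pose proof (mono n rs c y (S k) (length rs) Hn Hf Hc Hinc ltac:(lia) ltac:(lia) Hy) as M1.
  pose proof (mono n rs c y 0 k Hn Hf Hc Hinc ltac:(lia) ltac:(lia) Hy) as M2. cbn [T] in M2.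
  destruct (net n rs y Hn Hf) as [Hm Hnet].
  pose proof (Hinc k Hk).
  assert (Hnz: 0 < Z.of_nat n) by lia.
  assert (0 <= Z.of_nat n * (Z.of_nat n - 1)) by nia.
  destruct Hnet as [Hnet|Hnet]; [|lia].
  destruct (Z.eq_dec (T rs y (length rs)) (c k)) as [E1|E1];
  [destruct (Z.eq_dec y (c (S k))) as [E2|E2]|]; try lia.
  exfalso. apply Hd. rewrite <- E1, <- E2. auto.
Qed.

Fixpoint sum_to (N : nat) (f : nat -> nat) : nat :=
  match N with 0%nat => 0%nat | S N' => (sum_to N' f + f N')%nat end.

Lemma sum_add N f g : sum_to N (fun i => f i + g i)%nat = (sum_to N f + sum_to N g)%nat.
Proof. induction N; simpl; lia. Qed.

Lemma sum_exch N M (f : nat -> nat -> nat) :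
  sum_to N (fun i => sum_to M (fun j => f i j)) = sum_to M (fun j => sum_to N (fun i => f i j)).
Proof. induction N; simpl.
  - induction M; simpl; lia.
  - rewrite IHN. rewrite <- sum_add. reflexivity. Qed.

Lemma sum_le N f g : (forall i, (i < N)%nat -> f i <= g i)%nat -> (sum_to N f <= sum_to N g)%nat.
Proof. induction N; simpl; intros H; auto. specialize (IHN ltac:(intros; apply H; lia)).
  specialize (H N ltac:(lia)). lia. Qed.

Lemma sum_ext N f g : (forall i, (i < N)%nat -> f i = g i) -> sum_to N f = sum_to N g.
Proof. induction N; simpl; intros H; auto. rewrite IHN by (intros; apply H; lia).
  rewrite (H N) by lia. reflexivity. Qed.

Lemma sum_const N c : sum_to N (fun _ => c) = (N * c)%nat.
Proof. induction N; simpl; lia. Qed.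

Lemma sum_delta N a : (a < N)%nat -> sum_to N (fun i => if Nat.eqb i a then 1 else 0)%nat = 1%nat.
Proof. induction N; simpl; intros H; [lia|].
  destruct (Nat.eqb_spec N a).
  - subst. rewrite (sum_ext a _ (fun _ => 0%nat)). rewrite sum_const. lia.
    intros i Hi. destruct (Nat.eqb_spec i a); lia.
  - rewrite IHN by lia. lia. Qed.

Lemma sum_one N f a : (a < N)%nat -> f a = 1%nat -> (forall i, (i < N)%nat -> i <> a -> f i = 0%nat) ->
  sum_to N f = 1%nat.
Proof. intros Ha Hfa H. rewrite <- (sum_delta N a Ha). apply sum_ext.
  intros i Hi. destruct (Nat.eqb_spec i a); subst; auto. Qed.

Definition mv rs y j : nat := if Z.eq_dec (T rs y (S j)) (T rs y j) then 0%nat else 1%nat.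
Definition cnt rs y k : nat := sum_to k (mv rs y).

Lemma cnt_mono rs y a b : (a <= b)%nat -> (cnt rs y a <= cnt rs y b)%nat.
Proof. intros H. induction b. assert (a = 0%nat) by lia; subst; lia.
  destruct (Nat.eq_dec a (S b)). subst; lia. unfold cnt in *; simpl. specialize (IHb ltac:(lia)). lia. Qed.

Lemma ar_moved n i j x : (0 < Z.of_nat n) -> i mod Z.of_nat n <> j mod Z.of_nat n ->
  aff_refl n i j x <> x -> aff_refl n i j x mod Z.of_nat n <> x mod Z.of_nat n.
Proof. intros Hn Hij H. rewrite ar_mod by auto.
  destruct (Z.eqb_spec (x mod Z.of_nat n) (i mod Z.of_nat n)); [congruence|].
  destruct (Z.eqb_spec (x mod Z.of_nat n) (j mod Z.of_nat n)); [congruence|].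
  exfalso; apply H; apply ar_o; auto. Qed.

Lemma ar_disp n i j x : Z.abs (aff_refl n i j x - x) <= Z.abs (j - i).
Proof. unfold aff_refl.
  destruct (Z.eqb (x mod Z.of_nat n) (i mod Z.of_nat n)); [lia|].
  destruct (Z.eqb (x mod Z.of_nat n) (j mod Z.of_nat n)); lia. Qed.

Lemma bound n rs c y a b : chain n rs c ->
  (forall k, (k < length rs)%nat -> Z.abs (c (S k) - c k) < Z.of_nat n) ->
  (a <= b)%nat -> (b <= length rs)%nat ->
  Z.abs (T rs y b - T rs y a) <= (Z.of_nat n - 1) * (Z.of_nat (cnt rs y b) - Z.of_nat (cnt rs y a)).
Proof. intros Hc Hs Hab Hb. induction b.
  - assert (a = 0%nat) by lia. subst. lia.
  - destruct (Nat.eq_dec a (S b)). subst; lia.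
    specialize (IHb ltac:(lia) ltac:(lia)).
    assert (Hst : Z.abs (T rs y (S b) - T rs y b) <= (Z.of_nat n - 1) * Z.of_nat (mv rs y b)).
    { unfold mv. destruct (Z.eq_dec (T rs y (S b)) (T rs y b)) as [E|E].
      - rewrite E. lia.
      - rewrite (chain_step n rs c) by (auto; lia). pose proof (ar_disp n (c b) (c (S b)) (T rs y b)).
        specialize (Hs b ltac:(lia)). lia. }
    unfold cnt in *. simpl sum_to. rewrite Nat2Z.inj_add. lia.
Qed.

Lemma resid n rs c y a b : (1 <= n)%nat -> in_fact_lambda n rs -> chain n rs c ->
  (a <= b)%nat -> (b <= length rs)%nat ->
  (cnt rs y b = cnt rs y a -> T rs y b = T rs y a) /\
  (cnt rs y b = S (cnt rs y a) -> T rs y b mod Z.of_nat n <> T rs y a mod Z.of_nat n).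
Proof. intros Hn Hf Hc Hab Hb. induction b.
  - assert (a = 0%nat) by lia. subst. split; auto. lia.
  - destruct (Nat.eq_dec a (S b)). subst; split; auto; lia.
    specialize (IHb ltac:(lia) ltac:(lia)). destruct IHb as [I1 I2].
    pose proof (cnt_mono rs y a b ltac:(lia)).
    unfold cnt in *. simpl sum_to.
    destruct (Z.eq_dec (T rs y (S b)) (T rs y b)) as [E|E].
    + assert (M : mv rs y b = 0%nat) by (unfold mv; destruct Z.eq_dec; congruence).
      rewrite M, E. split; intros; [apply I1|apply I2]; lia.
    + assert (M : mv rs y b = 1%nat) by (unfold mv; destruct Z.eq_dec; congruence).
      rewrite M. split; intros H'. lia.
      assert (H0 : sum_to b (mv rs y) = sum_to a (mv rs y)) by lia.
      rewrite <- (I1 H0). rewrite (chain_step n rs c) in * by (auto; lia).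
      destruct (Hc b ltac:(lia)) as [Hd _].
      apply ar_moved; auto. lia.
Qed.

Lemma res_small n r : (r < n)%nat -> Z.of_nat r mod Z.of_nat n = Z.of_nat r.
Proof. intros H. apply Z.mod_small. lia. Qed.

Lemma res_inj n r r' : (r < n)%nat -> (r' < n)%nat ->
  Z.of_nat r mod Z.of_nat n = Z.of_nat r' mod Z.of_nat n -> r = r'.
Proof. intros H H' E. rewrite !res_small in E by auto. lia. Qed.

Definition rho0 n (c : nat -> Z) : nat := Z.to_nat (c 0%nat mod Z.of_nat n).

Lemma rho0_spec n c : (1 <= n)%nat -> (rho0 n c < n)%nat /\ Z.of_nat (rho0 n c) = c 0%nat mod Z.of_nat n.
Proof. intros Hn. unfold rho0. pose proof (Z.mod_pos_bound (c 0%nat) (Z.of_nat n) ltac:(lia)).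
  split; lia. Qed.

Lemma exist_mover n rs c j : (1 <= n)%nat -> in_fact_lambda n rs -> chain n rs c ->
  (j < length rs)%nat ->
  exists r1, (r1 < n)%nat /\ r1 <> rho0 n c /\
    T rs (Z.of_nat r1) j mod Z.of_nat n = c (S j) mod Z.of_nat n /\ mv rs (Z.of_nat r1) j = 1%nat.
Proof. intros Hn Hf Hc Hj. pose proof Hf as [_ [Hr _]].
  assert (HN : 0 < Z.of_nat n) by lia.
  set (z := prod_list (firstn j rs) (c (S j))).
  assert (Tz : T rs z j = c (S j)) by (apply TP with n; auto; lia).
  exists (Z.to_nat (z mod Z.of_nat n)).
  pose proof (Z.mod_pos_bound z (Z.of_nat n) HN).
  rewrite Z2Nat.id by lia.
  destruct (Hc j Hj) as [Hd He].
  assert (E1 : T rs (z mod Z.of_nat n) j mod Z.of_nat n = c (S j) mod Z.of_nat n).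
  { rewrite <- Tz. apply Tcong; auto. apply Zmod_mod. }
  split; [lia|]. split; [|split; auto].
  - intros Heq. pose proof (rho0_spec n c Hn) as [_ R]. rewrite <- Heq in R.
    rewrite Z2Nat.id in R by lia. apply Hd. rewrite <- E1.
    rewrite <- (chain_T n rs c j Hc ltac:(lia)). symmetry. apply Tcong; auto.
    rewrite R. apply Zmod_mod.
  - unfold mv. destruct Z.eq_dec as [E|E]; auto. exfalso.
    rewrite (chain_step n rs c) in E by auto. rewrite ar_j in E by auto.
    apply Hd. assert (c j = c (S j)) by lia. congruence.
Qed.

Lemma unique_mover n rs c j r1 r : (1 <= n)%nat -> in_fact_lambda n rs -> chain n rs c ->
  (j < length rs)%nat -> (r1 < n)%nat ->
  T rs (Z.of_nat r1) j mod Z.of_nat n = c (S j) mod Z.of_nat n ->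
  (r < n)%nat -> r <> rho0 n c -> r <> r1 -> mv rs (Z.of_nat r) j = 0%nat.
Proof. intros Hn Hf Hc Hj Hr1 E1 Hr H0 H1. pose proof Hf as [_ [Hrr _]].
  assert (HN : 0 < Z.of_nat n) by lia.
  destruct (Hc j Hj) as [Hd He].
  pose proof (rho0_spec n c Hn) as [R0 R].
  assert (A1 : T rs (Z.of_nat r) j mod Z.of_nat n <> c j mod Z.of_nat n).
  { intros E. apply H0. apply (res_inj n); auto. rewrite R, Zmod_mod.
    apply (Trefl n rs _ _ j HN Hrr). rewrite (chain_T n rs c j Hc ltac:(lia)). auto. }
  assert (A2 : T rs (Z.of_nat r) j mod Z.of_nat n <> c (S j) mod Z.of_nat n).
  { intros E. apply H1. apply (res_inj n); auto.
    apply (Trefl n rs _ _ j HN Hrr). congruence. }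
  unfold mv. destruct Z.eq_dec as [E|E]; auto. exfalso. apply E.
  rewrite (chain_step n rs c) by auto. apply ar_o; auto.
Qed.

Lemma cnt_ge2 n rs y : (2 <= n)%nat -> in_fact_lambda n rs -> forall c, chain n rs c ->
  (2 <= cnt rs y (length rs))%nat.
Proof. intros Hn2 Hf c Hc. assert (Hn : (1 <= n)%nat) by lia.
  destruct (resid n rs c y 0 (length rs) Hn Hf Hc ltac:(lia) ltac:(lia)) as [R1 R2].
  destruct (net n rs y Hn Hf) as [Hm Hnet]. cbn [T] in *.
  assert (cnt rs y 0 = 0%nat) by reflexivity.
  assert (0 < Z.of_nat n * (Z.of_nat n - 1)) by nia.
  destruct (cnt rs y (length rs)) as [|[|k]] eqn:E.
  - specialize (R1 ltac:(lia)). rewrite R1 in Hnet. lia.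
  - exfalso. apply (R2 ltac:(lia)). auto.
  - lia.
Qed.

Lemma cnt_eq2 n rs c r : (2 <= n)%nat -> in_fact_lambda n rs -> chain n rs c ->
  length rs = (2 * n - 2)%nat -> (r < n)%nat -> r <> rho0 n c ->
  cnt rs (Z.of_nat r) (length rs) = 2%nat.
Proof. intros Hn2 Hf Hc Hl Hr Hr0. assert (Hn : (1 <= n)%nat) by lia.
  set (f := fun r j => if Nat.eqb r (rho0 n c) then 0%nat else mv rs (Z.of_nat r) j).
  assert (Col : forall j, (j < length rs)%nat -> sum_to n (fun r => f r j) = 1%nat).
  { intros j Hj. destruct (exist_mover n rs c j Hn Hf Hc Hj) as [r1 [H1 [H2 [H3 H4]]]].
    apply sum_one with r1; auto.
    - unfold f. destruct (Nat.eqb_spec r1 (rho0 n c)); [lia|auto].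
    - intros i Hi Hne. unfold f. destruct (Nat.eqb_spec i (rho0 n c)); auto.
      apply (unique_mover n rs c j r1 i); auto. }
  assert (Tot : sum_to n (fun r => sum_to (length rs) (fun j => f r j)) = length rs).
  { rewrite sum_exch. rewrite (sum_ext _ _ (fun _ => 1%nat)) by auto. rewrite sum_const. lia. }
  assert (Row : forall r, sum_to (length rs) (fun j => f r j) =
     if Nat.eqb r (rho0 n c) then 0%nat else cnt rs (Z.of_nat r) (length rs)).
  { intros r'. unfold f, cnt. destruct (Nat.eqb r' (rho0 n c)).
    - rewrite sum_const. lia.
    - reflexivity. }
  pose proof (rho0_spec n c Hn) as [R0 _].
  pose proof (cnt_ge2 n rs (Z.of_nat r) Hn2 Hf c Hc).
  destruct (Nat.eq_dec (cnt rs (Z.of_nat r) (length rs)) 2) as [|Hne]; auto. exfalso.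
  assert (Le : (sum_to n (fun i => 2 + (if Nat.eqb i r then 1 else 0)) <=
     sum_to n (fun i => sum_to (length rs) (fun j => f i j) + 2 * (if Nat.eqb i (rho0 n c) then 1 else 0)))%nat).
  { apply sum_le. intros i Hi. rewrite Row.
    destruct (Nat.eqb_spec i (rho0 n c)); destruct (Nat.eqb_spec i r); subst; try lia.
    pose proof (cnt_ge2 n rs (Z.of_nat i) Hn2 Hf c Hc). lia. }
  rewrite !sum_add, Tot, sum_const in Le.
  rewrite (sum_ext n (fun i => 2 * (if Nat.eqb i (rho0 n c) then 1 else 0))%nat
     (fun i => (if Nat.eqb i (rho0 n c) then 1 else 0) + (if Nat.eqb i (rho0 n c) then 1 else 0))%nat) in Le
    by (intros; lia).
  rewrite sum_add, !sum_delta in Le by auto. lia.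
Qed.

Theorem thmB n rs c : (3 <= n)%nat -> in_fact_lambda n rs -> chain n rs c ->
  (forall k, (k < length rs)%nat -> Z.abs (c (S k) - c k) < Z.of_nat n) ->
  forall k, (k < length rs)%nat -> c k < c (S k).
Proof. intros Hn3 Hf Hc Hs k Hk.
  assert (Hn : (1 <= n)%nat) by lia. assert (Hn2 : (2 <= n)%nat) by lia.
  pose proof Hf as [Hl _].
  destruct (exist_mover n rs c k Hn Hf Hc Hk) as [r1 [H1 [H2 [H3 H4]]]].
  set (y := Z.of_nat r1) in *.
  pose proof (cnt_eq2 n rs c r1 Hn2 Hf Hc Hl H1 H2) as C2. fold y in C2.
  assert (CS : cnt rs y (S k) = S (cnt rs y k)) by (unfold cnt; cbn [sum_to]; rewrite H4; lia).
  pose proof (cnt_mono rs y (S k) (length rs) ltac:(lia)) as M.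
  pose proof (bound n rs c y 0 (length rs) Hc Hs ltac:(lia) ltac:(lia)) as B0.
  pose proof (bound n rs c y 0 k Hc Hs ltac:(lia) ltac:(lia)) as B1.
  pose proof (bound n rs c y (S k) (length rs) Hc Hs ltac:(lia) ltac:(lia)) as B2.
  assert (cnt rs y 0 = 0%nat) by reflexivity.
  cbn [T] in B0, B1.
  destruct (net n rs y Hn Hf) as [_ Hnet].
  destruct (Hc k Hk) as [Hd _].
  assert (TS : T rs y (S k) = T rs y k + (c k - c (S k))).
  { rewrite (chain_step n rs c) by auto. apply ar_j; auto. }
  rewrite C2 in B0, B2. rewrite CS in B2. rewrite H in B0, B1.
  set (K := cnt rs y k) in *.
  assert (Z.of_nat (S K) <= 2) by lia.
  assert (Hsum : (Z.of_nat n - 1) * (Z.of_nat K - 0) + (Z.of_nat n - 1) * (Z.of_nat 2 - Z.of_nat (S K))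
     = Z.of_nat n - 1) by lia.
  assert (Hnn : (Z.of_nat n - 1) * (Z.of_nat 2 - Z.of_nat 0) < Z.of_nat n * (Z.of_nat n - 1)) by nia.
  destruct Hnet as [Hnet|Hnet]; [|lia].
  lia.
Qed.

Lemma factor_S rs k : factor rs (S k) = nth k rs (fun x => x).
Proof. unfold factor. f_equal. lia. Qed.

Lemma is_refl_sym n r i j : is_refl_ij n r i j -> is_refl_ij n r j i.
Proof. intros [H1 H2]. split; auto. intros k. rewrite H2. symmetry. apply ar_sym. auto. Qed.

Fixpoint cc (a b : nat -> Z) (k : nat) : Z :=
  match k with 0%nat => a 0%nat | S k' => cc a b k' + (b k - a k') end.

Lemma mod_ex n x y : (0 < Z.of_nat n) -> x mod Z.of_nat n = y mod Z.of_nat n ->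
  exists t, x = y + t * Z.of_nat n.
Proof. intros Hn E. exists (x / Z.of_nat n - y / Z.of_nat n).
  pose proof (Z.div_mod x (Z.of_nat n) ltac:(lia)). pose proof (Z.div_mod y (Z.of_nat n) ltac:(lia)).
  lia. Qed.

Theorem proposition3p4 (n : nat) (rs : list (Z -> Z)) :
  (2 <= n)%nat ->
  in_fact_lambda n rs ->
  (tree_like n rs <->
   exists a : nat -> Z,
     forall l : nat, (1 <= l <= 2 * n - 2)%nat ->
       is_refl_ij n (factor rs l) (a (l - 1)%nat) (a l) /\
       Z.abs (a l - a (l - 1)%nat) < Z.of_nat n).
Proof.
  intros Hn2 Hf. pose proof Hf as [Hl _].
  assert (Hn : (1 <= n)%nat) by lia. assert (HN : 0 < Z.of_nat n) by lia.
  split.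
  - intros [a [b [H1 H2]]].
    set (c := cc a b).
    assert (Ht : forall k, (k < length rs)%nat -> exists t, c k = a k + t * Z.of_nat n).
    { induction k; intros Hk.
      - exists 0. unfold c; simpl. ring.
      - destruct (IHk ltac:(lia)) as [t Ht].
        destruct (mod_ex n (b (S k)) (a (S k)) HN) as [s Hs].
        { symmetry. apply H2. lia. }
        exists (t + s). unfold c in *; simpl. rewrite Ht, Hs. ring. }
    assert (Hch : chain n rs c).
    { intros k Hk. destruct (Ht k Hk) as [t Htk].
      destruct (H1 (S k) ltac:(lia)) as [Hlt [Hd He]].
      replace (S k - 1)%nat with k in * by lia. rewrite factor_S in He.
      assert (Hck0 : c (S k) = c k + (b (S k) - a k)) by reflexivity.
      assert (Hck : c (S k) = b (S k) + t * Z.of_nat n) by lia.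
      rewrite Htk, Hck, !Z_mod_plus_full. split; auto.
      intros x. rewrite He, ar_shift; auto. }
    assert (Hinc : forall k, (k < length rs)%nat -> c k < c (S k)).
    { intros k Hk. destruct (H1 (S k) ltac:(lia)) as [Hlt _].
      replace (S k - 1)%nat with k in * by lia. unfold c; simpl. lia. }
    pose proof (thmA n rs c Hn Hf Hch Hinc) as HA.
    exists c. intros q Hq. destruct q as [|k]; [lia|].
    replace (S k - 1)%nat with k by lia.
    destruct (Hch k ltac:(lia)) as [Hd He].
    split.
    + split; auto. intros x. rewrite factor_S. apply He.
    + specialize (HA k ltac:(lia)). specialize (Hinc k ltac:(lia)). lia.
  - intros [a Ha].
    assert (Hch : chain n rs a).
    { intros k Hk. destruct (Ha (S k) ltac:(lia)) as [[Hd He] _].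
      replace (S k - 1)%nat with k in * by lia. rewrite factor_S in He. split; auto. }
    assert (Hs : forall k, (k < length rs)%nat -> Z.abs (a (S k) - a k) < Z.of_nat n).
    { intros k Hk. destruct (Ha (S k) ltac:(lia)) as [_ Hab].
      replace (S k - 1)%nat with k in * by lia. auto. }
    assert (Inc : (forall l, (1 <= l <= 2 * n - 2)%nat -> a (l - 1)%nat < a l) -> tree_like n rs).
    { intros Hi. exists a, a. split; auto. intros q Hq. split; auto. apply Ha; auto. }
    destruct (Nat.eq_dec n 2) as [E2|E2].
    +
      subst n. simpl in Hl.
      destruct (net 2 rs (a 0%nat) Hn Hf) as [_ Hnet].
      rewrite (chain_T 2 rs a) in Hnet by (auto; lia). rewrite Hl in Hnet.
      pose proof (Hs 0%nat ltac:(lia)) as S0. pose proof (Hs 1%nat ltac:(lia)) as S1.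
      destruct (Hch 0%nat ltac:(lia)) as [D0 _]. destruct (Hch 1%nat ltac:(lia)) as [D1 _].
      assert (a 1%nat <> a 0%nat) by (intros E; apply D0; rewrite E; auto).
      assert (a 2%nat <> a 1%nat) by (intros E; apply D1; rewrite E; auto).
      simpl Z.of_nat in *.
      destruct (Z_lt_le_dec (a 0%nat) (a 1%nat)).
      * apply Inc. intros q Hq. assert (q = 1%nat \/ q = 2%nat) as [-> | ->] by lia; simpl; lia.
      * exists (fun l => a (S l)), (fun l => a (l - 1)%nat). split.
        -- intros q Hq. assert (q = 1%nat \/ q = 2%nat) as [-> | ->] by lia; simpl.
           ++ split; [lia|]. apply is_refl_sym. apply (Ha 1%nat). lia.
           ++ split; [lia|]. apply is_refl_sym. apply (Ha 2%nat). lia.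
        -- intros q Hq. assert (q = 1%nat) as -> by lia. simpl.
           replace (a 2%nat) with (a 0%nat + (-1) * 2) by lia.
           apply Z_mod_plus_full.
    + apply Inc. intros q Hq. destruct q as [|k]; [lia|].
      replace (S k - 1)%nat with k by lia.
      apply (thmB n rs a ltac:(lia) Hf Hch Hs). lia.
Qed.
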